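(* Let $(\alpha_D)_D$ be a holomorphically contractible family of pseudometrics, and let $G_2=\{(z_1,z_2)\in\mathbb{C}^2: |z_1|(1+|z_2|)<1\}$. Then $\mathbb W\alpha_{G_2}$ is not upper semicontinuous on $G_2\times\mathbb{C}^2$.
   Context: $\Delta$ is the open unit disc in $\mathbb{C}$. A pseudometric on a domain $D\subset\mathbb{C}^n$ is a function $\eta:D\times\mathbb{C}^n\to[0,\infty)$ with $\eta(a;\lambda X)=|\lambda|\eta(a;X)$. A holomorphically contractible family of pseudometrics is an assignment of a pseudometric $\alpha_D$ to every domain $D\subset\mathbb{C}^n$, for all $n\ge1$, such that $\alpha_\Delta(z;X)=|X|/(1-|z|^2)$ and $\alpha_{D_2}(F(z);F'(z)X)\le\alpha_{D_1}(z;X)$ for all domains $D_1\subset\mathbb{C}^{n_1}$, $D_2\subset\mathbb{C}^{n_2}$, holomorphic $F:D_1\to D_2$, $z\in D_1$, $X\in\mathbb{C}^{n_1}$. (Such $\alpha_D$ lie in $\mathcal M(D)$.) $\mathcal M(D)$: pseudometrics $\eta$ on $D$ such that for every $a\in D$ there are $M,r>0$ with $\eta(z;X)\le M\|X\|$ for $z$ in the ball $\mathbb{B}(a,r)\subset D$, $X\in\mathbb{C}^n$. Wu pseudometric: for $\eta\in\mathcal M(D)$ and $a\in D$, let $\widehat\eta(a;X)=\sup p(X)$ over all $\mathbb{C}$-seminorms $p\le\eta(a;\cdot)$. Let $V_\eta(a)=\{X:\widehat\eta(a;X)=0\}$, $U_\eta(a)$ its orthogonal complement (standard Hermitian product), $m(\eta,a)=\dim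 U_\eta(a)$. Let $\mathcal F(\eta,a)$ be the set of positive semidefinite Hermitian forms $s$ on $\mathbb{C}^n$ with $\sqrt{s(X,X)}\le\eta(a;X)$ for all $X$, ordered by $\alpha\prec\beta$ iff $\det[\alpha(e_j,e_k)]\le\det[\beta(e_j,e_k)]$ for a basis $(e_j)$ of $U_\eta(a)$; it has a unique maximal element $s(\eta,a)$. Set $\widetilde{\mathbb W}\eta(a;X)=\sqrt{s(\eta,a)(X,X)}$ and $\mathbb W\eta(a;X)=\sqrt{m(\eta,a)}\,\widetilde{\mathbb W}\eta(a;X)$. *)

(* Defs.v *)
From HB Require Import structures.
From mathcomp Require Import all_boot all_order all_algebra.
From mathcomp Require Import boolp classical_sets reals.
From mathcomp Require Import complex.

Set Implicit Arguments.
Unset Strict Implicit.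
Unset Printing Implicit Defensive.

Import Order.TTheory GRing.Theory Num.Theory.
Local Open Scope ring_scope.
Local Open Scope classical_set_scope.

(* Throughout, R : realType, and the complex numbers are C = R[i].
   Vectors of C^n are ROW vectors 'rV[R[i]]_n, a linear map C^n1 -> C^n2 is
   a matrix L : 'M_(n1,n2) acting by X |-> X *m L. *)

Section Defs.
Variable R : realType.
Local Notation C := (R[i]).

Definition cabs (z : C) : R := Num.sqrt (complex.Re z ^+ 2 + complex.Im z ^+ 2).

Definition cconj (z : C) : C := Complex (complex.Re z) (- complex.Im z).

Definition hdot n (X Y : 'rV[C]_n) : C := \sum_i X 0 i * cconj (Y 0 i).

Definition cnorm n (X : 'rV[C]_n) : R := Num.sqrt (\sum_i cabs (X 0 i) ^+ 2).

Definition copen n (D : set 'rV[C]_n) : Prop :=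
  forall a, D a -> exists r : R, 0 < r /\ forall z, cnorm (z - a) < r -> D z.

Definition cconnected n (D : set 'rV[C]_n) : Prop :=
  forall A B : set 'rV[C]_n, copen A -> copen B ->
    D `<=` A `|` B -> D `&` A `&` B = set0 -> D `<=` A \/ D `<=` B.

Definition domain n (D : set 'rV[C]_n) : Prop :=
  copen D /\ cconnected D /\ D !=set0.

Definition cderiv n1 n2 (F : 'rV[C]_n1 -> 'rV[C]_n2) (z : 'rV[C]_n1)
    (L : 'M[C]_(n1, n2)) : Prop :=
  forall eps : R, 0 < eps -> exists delta : R, 0 < delta /\
    forall h, cnorm h < delta ->
      cnorm (F (z + h) - F z - h *m L) <= eps * cnorm h.

Definition holo_map n1 n2 (D1 : set 'rV[C]_n1) (D2 : set 'rV[C]_n2)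
    (F : 'rV[C]_n1 -> 'rV[C]_n2) : Prop :=
  (forall z, D1 z -> D2 (F z)) /\
  (forall z, D1 z -> exists L, cderiv F z L).

Definition unit_disc : set 'rV[C]_1 := [set z | cabs (z 0 0) < 1].

Definition G2 : set 'rV[C]_2 :=
  [set z | cabs (z 0 0) * (1 + cabs (z 0 1)) < 1].

(* A holomorphically contractible family: alpha n D is the pseudometric
   alpha_D for a domain D of C^(n+1) (so n+1 ranges over all dimensions >= 1);
   alpha n D a X is alpha_D(a;X). *)
Definition holo_contractible_family
    (alpha : forall n : nat, set 'rV[C]_n.+1 -> 'rV[C]_n.+1 -> 'rV[C]_n.+1 -> R)
    : Prop :=
  (forall n (D : set 'rV[C]_n.+1), domain D ->
     forall a X, D a -> 0 <= alpha n D a X /\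
       forall lam : C, alpha n D a (lam *: X) = cabs lam * alpha n D a X) /\
  (forall z X : 'rV[C]_1, unit_disc z ->
     alpha 0%N unit_disc z X = cabs (X 0 0) / (1 - cabs (z 0 0) ^+ 2)) /\
  (forall n1 n2 (D1 : set 'rV[C]_n1.+1) (D2 : set 'rV[C]_n2.+1)
          (F : 'rV[C]_n1.+1 -> 'rV[C]_n2.+1),
     domain D1 -> domain D2 -> holo_map D1 D2 F ->
     forall z L X, D1 z -> cderiv F z L ->
       alpha n2 D2 (F z) (X *m L) <= alpha n1 D1 z X).

Section Wu.
Variable n : nat.
Variable eta : 'rV[C]_n -> 'rV[C]_n -> R.
Variable a : 'rV[C]_n.

Definition cseminorm (p : 'rV[C]_n -> R) : Prop :=
  (forall X Y, p (X + Y) <= p X + p Y) /\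
  (forall (lam : C) X, p (lam *: X) = cabs lam * p X).

Definition eta_hat (X : 'rV[C]_n) : R :=
  sup [set p X | p in [set p | cseminorm p /\ forall Y, p Y <= eta a Y]].

Definition V_eta : set 'rV[C]_n := [set X | eta_hat X = 0].

Definition U_eta : set 'rV[C]_n := [set Y | forall X, V_eta X -> hdot X Y = 0].

Definition is_basis_U k (E : 'M[C]_(k, n)) : Prop :=
  row_free E /\ forall X, U_eta X <-> (X <= E)%MS.

Definition m_eta : nat := xget 0%N [set k | exists E : 'M[C]_(k, n), is_basis_U E].

Definition hform (S : 'M[C]_n) (X Y : 'rV[C]_n) : C :=
  (X *m S *m (map_mx cconj Y)^T) 0 0.

Definition hermitian (S : 'M[C]_n) : Prop := S^T = map_mx cconj S.

Definition F_eta : set 'M[C]_n :=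
  [set S | hermitian S /\ forall X, 0 <= hform S X X /\
     Num.sqrt (complex.Re (hform S X X)) <= eta a X].

Definition gram k (S : 'M[C]_n) (E : 'M[C]_(k, n)) : 'M[C]_k :=
  \matrix_(j, l) hform S (row j E) (row l E).

(* the order alpha < beta : det comparison on a basis of U (independent of
   the basis; we require it for every basis) *)
Definition prec_eta (S T : 'M[C]_n) : Prop :=
  forall k (E : 'M[C]_(k, n)), is_basis_U E -> \det (gram S E) <= \det (gram T E).

Definition s_eta : 'M[C]_n :=
  xget 0 [set S | F_eta S /\ forall T, F_eta T -> prec_eta T S].

Definition Wtilde (X : 'rV[C]_n) : R := Num.sqrt (complex.Re (hform s_eta X X)).

End Wu.

Definition Wu n (eta : 'rV[C]_n -> 'rV[C]_n -> R) (a X : 'rV[C]_n) : R :=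
  Num.sqrt (m_eta eta a)%:R * Wtilde eta a X.

Definition usc_on n (D : set 'rV[C]_n) (f : 'rV[C]_n -> 'rV[C]_n -> R) : Prop :=
  forall a X, D a -> forall eps : R, 0 < eps -> exists delta : R, 0 < delta /\
    forall b Y, D b -> cnorm (b - a) < delta -> cnorm (Y - X) < delta ->
      f b Y < f a X + eps.

End Defs.

(* Main.v *)
Require Import Defs.
From HB Require Import structures.
From mathcomp Require Import all_boot all_order all_algebra.
From mathcomp Require Import boolp classical_sets reals.
From mathcomp Require Import complex.
From mathcomp Require Import topology normedtype derive.
From mathcomp Require Import ring lra.
Set Implicit Arguments.
Unset Strict Implicit.
Unset Printing Implicit Defensive.
Import Order.TTheory GRing.Theory Num.Theory.
Import numFieldNormedType.Exports.
Local Open Scope ring_scope.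
Local Open Scope classical_set_scope.
Local Open Scope complex_scope.
Section Main.
Variable R : realType.
Local Notation C := (R[i]).


Lemma cabsC (z : C) : (cabs z)%:C = `|z|.
Proof. by rewrite normc_def. Qed.

Lemma cabs_ge0 (z : C) : 0 <= cabs z.
Proof. exact: sqrtr_ge0. Qed.

Lemma cabsM (z w : C) : cabs (z * w) = cabs z * cabs w.
Proof. by apply: complexI; rewrite rmorphM /= !cabsC normrM. Qed.

Lemma cabsD (z w : C) : cabs (z + w) <= cabs z + cabs w.
Proof. by rewrite -lecR rmorphD /= !cabsC ler_normD. Qed.

Lemma cabsN (z : C) : cabs (- z) = cabs z.
Proof. by apply: complexI; rewrite !cabsC normrN. Qed.

Lemma cabsR (r : R) : cabs (r%:C) = `|r|.
Proof. by rewrite /cabs /= expr0n /= addr0 sqrtr_sqr. Qed.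

Lemma cconjE (z : C) : cconj z = z^*%C.
Proof. by case: z. Qed.

Lemma cabs2 (z : C) : z * z^*%C = (cabs z ^+ 2)%:C.
Proof. by rewrite -sqr_normc rmorphXn /= cabsC. Qed.

Lemma cnorm_ge0 n (X : 'rV[C]_n) : 0 <= cnorm X.
Proof. exact: sqrtr_ge0. Qed.

Lemma cabs_le_cnorm n (X : 'rV[C]_n) i : cabs (X 0 i) <= cnorm X.
Proof.
rewrite -[cabs _]ger0_norm ?cabs_ge0 // -sqrtr_sqr; apply: ler_wsqrtr.
rewrite (bigD1 i) //= lerDl; apply: sumr_ge0 => j _; exact: sqr_ge0.
Qed.

Lemma cnorm1 (X : 'rV[C]_1) : cnorm X = cabs (X 0 0).
Proof. by rewrite /cnorm big_ord1 sqrtr_sqr ger0_norm ?cabs_ge0. Qed.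

Lemma cnorm2 (X : 'rV[C]_2) : cnorm X = Num.sqrt (cabs (X 0 0) ^+ 2 + cabs (X 0 1) ^+ 2).
Proof.
rewrite /cnorm big_ord_recr big_ord1 /=.
by congr (Num.sqrt (cabs (X 0 _) ^+ 2 + cabs (X 0 _) ^+ 2)); apply/val_inj.
Qed.

Lemma cnormZ n (c : C) (X : 'rV[C]_n) : cnorm (c *: X) = cabs c * cnorm X.
Proof.
rewrite /cnorm (eq_bigr (fun i => cabs c ^+ 2 * cabs (X 0 i) ^+ 2)); last first.
  by move=> i _; rewrite mxE cabsM exprMn.
rewrite -mulr_sumr sqrtrM ?sqr_ge0 // sqrtr_sqr ger0_norm ?cabs_ge0 //.
Qed.

Lemma cnorm0 n : cnorm (0 : 'rV[C]_n) = 0.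
Proof.
rewrite /cnorm big1 ?sqrtr0 // => i _; rewrite mxE.
by rewrite /cabs /= expr0n /= addr0 sqrtr0 expr0n.
Qed.


Lemma scale_diff n (s t : R) (z : 'rV[C]_n) :
  cnorm (s%:C *: z - t%:C *: z) = `|s - t| * cnorm z.
Proof. by rewrite -scalerBl -rmorphB cnormZ cabsR. Qed.

Lemma star_half n (D A B : set 'rV[C]_n) :
  (forall z (t : R), D z -> 0 <= t <= 1 -> D (t%:C *: z)) ->
  copen A -> copen B -> D `<=` A `|` B -> D `&` A `&` B = set0 ->
  A 0 -> D `<=` A.
Proof.
move=> star oA oB DAB DAB0 A0 z Dz.
pose A' := [set t : R | A (t%:C *: z)].
pose B' := [set t : R | B (t%:C *: z)].
have openX : forall (E : set 'rV[C]_n), copen E -> open [set t : R | E (t%:C *: z)].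
  move=> E oE; rewrite openE => t Et; apply/nbhs_ballP.
  have [r [r0 hr]] := oE _ Et.
  exists (r / (cnorm z + 1)); first by rewrite /= divr_gt0 // ltr_wpDl ?cnorm_ge0.
  move=> s; rewrite -ball_normE /= => hs; apply: hr.
  rewrite scale_diff distrC.
  have hz : 0 < cnorm z + 1 by rewrite ltr_wpDl ?cnorm_ge0.
  rewrite -(ltr_pM2r hz) in hs; rewrite mulfVK ?gt_eqF // in hs.
  apply: le_lt_trans hs; rewrite ler_wpM2l //= ?lerDl //.

have sub : `[0, 1] `&` A' = `[0, 1] :> set R.
  have := @segment_connected R 0 1; apply.
  - exists 0; split; first by rewrite /= in_itv /= lexx ler01.
    by rewrite /A' /= scale0r.
  - by exists A' => //; exact: openX.
  - exists (~` B'); first exact/open_closedC/openX.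
    apply/seteqP; split => t [t01 Ht]; split => //.
      move=> Bt; have : (D `&` A `&` B) (t%:C *: z).
        by split => //; split => //; apply: star => //; rewrite /= in_itv /= in t01.
      by rewrite DAB0.
    have : D (t%:C *: z) by apply: star => //; rewrite /= in_itv /= in t01.
    by case/DAB.
have : (`[0, 1] `&` A') 1 by rewrite sub /= in_itv /= lexx ler01.
by case => _; rewrite /A' /= scale1r.
Qed.

Lemma star_domain n (D : set 'rV[C]_n) : copen D -> D 0 ->
  (forall z (t : R), D z -> 0 <= t <= 1 -> D (t%:C *: z)) -> domain D.
Proof.
move=> oD D0 star; split => //; split; last by exists 0.
move=> A B oA oB DAB DAB0.
have := DAB _ D0; case => [A0|B0].
  by left; apply: (star_half star oA oB).
right; apply: (star_half star oB oA) => //.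
  by move=> x /DAB [] ?; [right|left].
by rewrite setIAC.
Qed.


Lemma cabs_near n (z a : 'rV[C]_n) i : cabs (z 0 i) <= cabs (a 0 i) + cnorm (z - a).
Proof.
have -> : z 0 i = a 0 i + (z - a) 0 i by rewrite !mxE addrCA subrr addr0.
by apply: le_trans (cabsD _ _) _; rewrite lerD2l cabs_le_cnorm.
Qed.

Lemma G2_open : copen (@G2 R).
Proof.
move=> a; rewrite /G2 /= => Ga.
set p := cabs (a 0 0) in Ga *; set q := cabs (a 0 1) in Ga *.
have p0 : 0 <= p by exact: cabs_ge0.
have q0 : 0 <= q by exact: cabs_ge0.
exists ((1 - p * (1 + q)) / (p + q + 2)); split.
  by rewrite divr_gt0 // ?subr_gt0 //; lra.
move=> z hz; rewrite /G2 /=.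
have h0 := cabs_near z a 0; have h1 := cabs_near z a 1.
rewrite -/p -/q in h0 h1.
set d := cnorm (z - a) in hz h0 h1.
have d0 : 0 <= d by exact: cnorm_ge0.
have hpq : 0 < p + q + 2 by lra.
rewrite ltr_pdivlMr // in hz.
have z0 : 0 <= cabs (z 0 0) by exact: cabs_ge0.
have z1 : 0 <= cabs (z 0 1) by exact: cabs_ge0.
have d1 : d < 1 by nra.
apply: (@le_lt_trans _ _ ((p + d) * (1 + q + d))).
  by apply: ler_pM; lra.
nra.
Qed.

Lemma G2_star z (t : R) : @G2 R z -> 0 <= t <= 1 -> @G2 R (t%:C *: z).
Proof.
rewrite /G2 /= !mxE !cabsM cabsR => Gz /andP[t0 t1].
rewrite ger0_norm //.
have z0 : 0 <= cabs (z 0 0) by exact: cabs_ge0.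
have z1 : 0 <= cabs (z 0 1) by exact: cabs_ge0.
apply: le_lt_trans Gz.
have h1 : t * cabs (z 0 0) <= cabs (z 0 0) by nra.
have h2 : 1 + t * cabs (z 0 1) <= 1 + cabs (z 0 1) by nra.
apply: ler_pM => //; [nra|nra].
Qed.

Lemma G2_0 : @G2 R 0.
Proof. by rewrite /G2 /= mxE /cabs /= expr0n /= addr0 sqrtr0 mul0r. Qed.

Lemma G2_domain : domain (@G2 R).
Proof. exact: star_domain G2_open G2_0 G2_star. Qed.

Lemma disc_open : copen (@unit_disc R).
Proof.
move=> a; rewrite /unit_disc /= => Ga.
exists (1 - cabs (a 0 0)); split; first by rewrite subr_gt0.
move=> z hz; rewrite /unit_disc /=.
have := cabs_near z a 0; lra.
Qed.

Lemma disc_domain : domain (@unit_disc R).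
Proof.
apply: star_domain disc_open _ _.
  by rewrite /unit_disc /= mxE /cabs /= expr0n /= addr0 sqrtr0.
move=> z t; rewrite /unit_disc /= mxE cabsM cabsR => Dz /andP[t0 t1].
rewrite ger0_norm //; have := cabs_ge0 (z 0 0); nra.
Qed.


Lemma sum2 (V : zmodType) (F : 'I_2 -> V) : \sum_(k < 2) F k = F 0 + F 1.
Proof.
rewrite big_ord_recr big_ord1 /=.
by congr (F _ + F _); apply/val_inj.
Qed.

Definition mk1 (u : C) : 'rV[C]_1 := \row_j u.
Definition mk2 (u v : C) : 'rV[C]_2 := \row_j (if j == ord0 then u else v).

Lemma mk1E u : mk1 u 0 0 = u. Proof. by rewrite mxE. Qed.
Lemma mk2E0 u v : mk2 u v 0 0 = u. Proof. by rewrite mxE. Qed.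
Lemma mk2E1 u v : mk2 u v 0 1 = v. Proof. by rewrite mxE. Qed.

Lemma rV1_eq (X Y : 'rV[C]_1) : X 0 0 = Y 0 0 -> X = Y.
Proof.
by move=> h; apply/rowP => j; rewrite (ord1 j).
Qed.

Lemma rV2_eq (X Y : 'rV[C]_2) : X 0 0 = Y 0 0 -> X 0 1 = Y 0 1 -> X = Y.
Proof.
move=> h0 h1; apply/rowP => j.
have [->|] := eqVneq j 0; first by [].
move=> jn0; have -> : j = 1; last by [].
apply/val_inj; case: j jn0 => [[|[|k]] Hk] //= _.
Qed.

Lemma mul12E (X : 'rV[C]_1) (L : 'M[C]_(1, 2)) j : (X *m L) 0 j = X 0 0 * L 0 j.
Proof. by rewrite mxE big_ord1. Qed.

Lemma mul21E (X : 'rV[C]_2) (L : 'M[C]_(2, 1)) : (X *m L) 0 0 = X 0 0 * L 0 0 + X 0 1 * L 1 0.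
Proof. by rewrite mxE sum2. Qed.

Lemma affine_cderiv n1 n2 (v0 : 'rV[C]_n2) (L : 'M[C]_(n1, n2)) z :
  cderiv (fun x => v0 + x *m L) z L.
Proof.
move=> eps eps0; exists 1; split => // h _.
have -> : v0 + (z + h) *m L - (v0 + z *m L) - h *m L = 0.
  by rewrite mulmxDl addrA (addrC (v0 + z *m L)) addrK subrr.
rewrite cnorm0.
by apply: mulr_ge0; [exact: ltW | exact: cnorm_ge0].
Qed.


Lemma det2 (A : 'M[C]_2) : \det A = A 0 0 * A 1 1 - A 0 1 * A 1 0.
Proof.
rewrite (expand_det_row _ 0) /cofactor.
rewrite big_ord_recr big_ord1 /= !det_mx11 !mxE /=.
have e0 : widen_ord (leqnSn 1) ord0 = 0 :> 'I_2 by apply/val_inj.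
have e1 : ord_max = 1 :> 'I_2 by apply/val_inj.
have e2 : lift 0 0 = 1 :> 'I_2 by apply/val_inj.
have e3 : lift 1 0 = 0 :> 'I_2 by apply/val_inj.
by rewrite e0 e1 e2 e3 /= expr0 expr1 mul1r mulN1r mulrN.
Qed.

Lemma hform2 (S : 'M[C]_2) (X Y : 'rV[C]_2) : hform S X Y =
  (X 0 0 * S 0 0 + X 0 1 * S 1 0) * cconj (Y 0 0) +
  (X 0 0 * S 0 1 + X 0 1 * S 1 1) * cconj (Y 0 1).
Proof. by rewrite /hform !mxE !sum2 !mxE !sum2. Qed.

Definition hm (v : 'rV[R]_4) : 'M[C]_2 :=
  \matrix_(i, j) (if i == 0 then (if j == 0 then (v 0 0)%:C else Complex (v 0 2) (v 0 3))
                 else (if j == 0 then Complex (v 0 2) (- v 0 3) else (v 0 1)%:C)).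

Lemma hm00 v : hm v 0 0 = (v 0 0)%:C. Proof. by rewrite mxE. Qed.
Lemma hm01 v : hm v 0 1 = Complex (v 0 2) (v 0 3). Proof. by rewrite mxE. Qed.
Lemma hm10 v : hm v 1 0 = Complex (v 0 2) (- v 0 3). Proof. by rewrite mxE. Qed.
Lemma hm11 v : hm v 1 1 = (v 0 1)%:C. Proof. by rewrite mxE. Qed.

Definition qf (v : 'rV[R]_4) (X : 'rV[C]_2) : R :=
  v 0 0 * (complex.Re (X 0 0) ^+ 2 + complex.Im (X 0 0) ^+ 2) +
  v 0 1 * (complex.Re (X 0 1) ^+ 2 + complex.Im (X 0 1) ^+ 2) +
  2 * (v 0 2 * (complex.Re (X 0 0) * complex.Re (X 0 1) + complex.Im (X 0 0) * complex.Im (X 0 1))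
     - v 0 3 * (complex.Im (X 0 0) * complex.Re (X 0 1) - complex.Re (X 0 0) * complex.Im (X 0 1))).

Lemma hform_hm v X : hform (hm v) X X = (qf v X)%:C.
Proof.
rewrite hform2 hm00 hm01 hm10 hm11 /qf.
move: (X 0 0) (X 0 1) (v 0 0) (v 0 1) (v 0 2) (v 0 3) => [x0 y0] [x1 y1] a d x y.
rewrite /cconj /=.
apply/eqP; rewrite eq_complex /=; apply/andP; split; apply/eqP; ring.
Qed.


Lemma ord2P (i : 'I_2) : i = 0 \/ i = 1.
Proof.
case: i => [[|[|k]] Hk]; [left|right|by []]; exact/val_inj.
Qed.

Lemma hm_herm v : Defs.hermitian (hm v).
Proof.
apply/matrixP => i j; rewrite !mxE.
case: (ord2P i) => ->; case: (ord2P j) => -> /=; rewrite /cconj /= ?oppr0 ?opprK //.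
Qed.

Definition pv (S : 'M[C]_2) : 'rV[R]_4 :=
  \row_k (if k == 0 then complex.Re (S 0 0) else if k == 1 then complex.Re (S 1 1)
          else if k == 2 then complex.Re (S 0 1) else complex.Im (S 0 1)).

Lemma herm_hm S : Defs.hermitian S -> S = hm (pv S).
Proof.
move=> hS; rewrite /Defs.hermitian in hS.
have e : forall i j, S j i = cconj (S i j).
  by move=> i j; have := congr1 (fun M : 'M[C]_2 => M i j) hS; rewrite !mxE.
have r : forall i, S i i = (complex.Re (S i i))%:C.
  move=> i; have := e i i; case: (S i i) => x y /= [] hy.
  by congr Complex; move/eqP: hy; rewrite -subr_eq0 opprK -mulr2n mulrn_eq0 /= => /eqP.
apply/matrixP => i j; rewrite !mxE.
case: (ord2P i) => ->; case: (ord2P j) => -> /=.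
- by rewrite [LHS]r.
- by case: (S 0 1).
- by rewrite e; case: (S 0 1).
- by rewrite [LHS]r.
Qed.

Lemma det_hm v : \det (hm v) = (v 0 0 * v 0 1 - v 0 2 ^+ 2 - v 0 3 ^+ 2)%:C.
Proof.
rewrite det2 hm00 hm01 hm10 hm11.
move: (v 0 0) (v 0 1) (v 0 2) (v 0 3) => a d x y.
apply/eqP; rewrite eq_complex /=; apply/andP; split; apply/eqP; ring.
Qed.

Lemma sqrt_le_iff (q e : R) : 0 <= e -> (Num.sqrt q <= e) = (q <= e ^+ 2).
Proof.
move=> e0; rewrite -{1}(ger0_norm e0) -sqrtr_sqr ler_sqrt //; exact: sqr_ge0.
Qed.

Lemma F_hm (eta : 'rV[C]_2 -> 'rV[C]_2 -> R) b v :
  (forall X, 0 <= eta b X) ->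
  F_eta eta b (hm v) <-> forall X, 0 <= qf v X /\ qf v X <= eta b X ^+ 2.
Proof.
move=> e0; split.
  case=> _ h X; have [h1 h2] := h X; move: h1 h2; rewrite hform_hm ler0c /= sqrt_le_iff //.
move=> h; split; first exact: hm_herm.
by move=> X; have [h1 h2] := h X; rewrite hform_hm ler0c /= sqrt_le_iff.
Qed.


Lemma contD (f g : 'rV[R]_4 -> R) : continuous f -> continuous g -> continuous (fun v => f v + g v).
Proof. move=> hf hg v. have := continuousD (hf v) (hg v). exact. Qed.
Lemma contM (f g : 'rV[R]_4 -> R) : continuous f -> continuous g -> continuous (fun v => f v * g v).
Proof. move=> hf hg v. have := continuousM (hf v) (hg v). exact. Qed.
Lemma contN (f : 'rV[R]_4 -> R) : continuous f -> continuous (fun v => - f v).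
Proof. move=> hf v. have := continuousN (hf v). exact. Qed.
Lemma contco i : continuous (fun v : 'rV[R]_4 => v 0 i).
Proof. exact: coord_continuous. Qed.
Lemma contcst (c : R) : continuous (fun v : 'rV[R]_4 => c).
Proof. exact: cst_continuous. Qed.

Ltac cont := repeat first [apply: contco | apply: contcst | apply: contD | apply: contM | apply: contN].

Lemma qf_cont X : continuous (fun v => qf v X).
Proof. rewrite /qf; cont. Qed.

Definition dtf (v : 'rV[R]_4) : R := v 0 0 * v 0 1 - v 0 2 ^+ 2 - v 0 3 ^+ 2.

Lemma dtf_cont : continuous dtf.
Proof. rewrite /dtf; under eq_fun do rewrite !expr2; cont. Qed.

Lemma qf_mk2 v a1 b1 a2 b2 : qf v (mk2 (Complex a1 b1) (Complex a2 b2)) =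
  v 0 0 * (a1 ^+ 2 + b1 ^+ 2) + v 0 1 * (a2 ^+ 2 + b2 ^+ 2) +
  2 * (v 0 2 * (a1 * a2 + b1 * b2) - v 0 3 * (b1 * a2 - a1 * b2)).
Proof. by rewrite /qf mk2E0 mk2E1. Qed.

Lemma ord4P (i : 'I_4) : [\/ i = 0, i = 1, i = 2 | i = 3].
Proof.
case: i => [[|[|[|[|k]]]] Hk]; [apply: Or41|apply: Or42|apply: Or43|apply: Or44|by []];
  exact/val_inj.
Qed.


Lemma gramE k (S : 'M[C]_2) (E : 'M[C]_(k, 2)) :
  gram S E = E *m S *m (map_mx (@cconj R) E)^T.
Proof.
apply/matrixP => i j; rewrite /gram /hform !mxE.
apply: eq_bigr => l _; rewrite !mxE; congr (_ * _).
by apply: eq_bigr => m _; rewrite !mxE.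
Qed.

Lemma cconj_conjc : (@cconj R) = (@conjc R).
Proof. by apply: funext => z; rewrite cconjE. Qed.

Lemma det_gram (S : 'M[C]_2) (E : 'M[C]_2) :
  \det (gram S E) = \det S * (cabs (\det E) ^+ 2)%:C.
Proof.
rewrite gramE !det_mulmx det_tr cconj_conjc det_map_mx /= -cabs2.
by rewrite (mulrC (\det E)) mulrA.
Qed.


Lemma exists_max (eta : 'rV[C]_2 -> 'rV[C]_2 -> R) b :
  (forall X, 0 <= eta b X) -> (forall Y, U_eta eta b Y) ->
  exists S, F_eta eta b S /\ forall T, F_eta eta b T -> prec_eta eta b T S.
Proof.
move=> e0 Uf.
pose K := [set v : 'rV[R]_4 | forall X, 0 <= qf v X /\ qf v X <= eta b X ^+ 2].
pose M := eta b (mk2 (Complex 1 0) (Complex 0 0)) ^+ 2 +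
          eta b (mk2 (Complex 0 0) (Complex 1 0)) ^+ 2.
have Kbox : K `<=` [set v | forall i, `[-M, M] (v 0 i)].
  move=> v Kv i.
  have [h1 h1'] := Kv (mk2 (Complex 1 0) (Complex 0 0)).
  have [h2 h2'] := Kv (mk2 (Complex 0 0) (Complex 1 0)).
  have [h3 _] := Kv (mk2 (Complex 1 0) (Complex 1 0)).
  have [h4 _] := Kv (mk2 (Complex 1 0) (Complex (-1) 0)).
  have [h5 _] := Kv (mk2 (Complex 1 0) (Complex 0 1)).
  have [h6 _] := Kv (mk2 (Complex 1 0) (Complex 0 (-1))).
  rewrite !qf_mk2 in h1 h1' h2 h2' h3 h4 h5 h6.
  rewrite /= in_itv /=.
  move: h1 h1' h2 h2' h3 h4 h5 h6; rewrite /M.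
  set A1 := eta b _; set A2 := eta b _.
  case: (ord4P i) => ->; move=> *; nra.
have clK : closed K.
  have -> : K = \bigcap_(X in setT) ([set v | 0 <= qf v X] `&` [set v | qf v X <= eta b X ^+ 2]).
    apply/seteqP; split => v /=.
      by move=> Kv X _; have [? ?] := Kv X.
    by move=> h X; have [] := h X I.
  apply: closed_bigI => X _; apply: closedI.
    apply: (@preimage_closed _ _ (fun v => qf v X) [set x | 0 <= x]).
      by move=> v _; exact: qf_cont.
    exact: closed_ge.
  apply: (@preimage_closed _ _ (fun v => qf v X) [set x | x <= eta b X ^+ 2]).
    by move=> v _; exact: qf_cont.
  exact: closed_le.
have cK : compact K.
  rewrite -(setIidr Kbox); apply: compact_closedI => //.
  apply: (@rV_compact _ _ (fun=> `[-M, M])) => _; exact: segment_compact.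
have K0 : K 0.
  move=> X; rewrite /qf !mxE !mul0r subrr mulr0 !addr0; split => //.
  exact: sqr_ge0.
have [c cK' cmax] := @EVT_max_rV R 4 dtf K (ex_intro _ 0 K0) cK
  (@continuous_subspaceT _ _ K dtf dtf_cont).
have Kc : K c by exact: set_mem.
exists (hm c); split; first by apply/F_hm.
move=> T FT k E [rf hb].
case: (FT) => hT _.
have KT : K (pv T).
  by move: FT; rewrite {1}(herm_hm hT) => /F_hm; apply.
have rk : \rank E = k by apply/eqP.
have sE : (1%:M <= E)%MS.
  by apply/row_subP => i; apply/hb; exact: Uf.
have k2 : k = 2%N.
  have := mxrankS sE; rewrite mxrank1 rk => h1.
  have := rank_leq_col E; rewrite rk => h2.
  by apply/eqP; rewrite eqn_leq h1 h2.
subst k.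
rewrite !det_gram {1}(herm_hm hT) !det_hm -!rmorphM lecR.
apply: ler_wpM2r; first exact: sqr_ge0.
exact: (cmax _ (mem_set KT)).
Qed.

Section P6.
Unset Implicit Arguments.
Variable alpha : forall n : nat, set 'rV[C]_n.+1 -> 'rV[C]_n.+1 -> 'rV[C]_n.+1 -> R.
Hypothesis hA : holo_contractible_family alpha.

Lemma cabs0 : cabs (0 : C) = 0.
Proof. by rewrite /cabs /= expr0n /= addr0 sqrtr0. Qed.
Lemma cabs1 : cabs (1 : C) = 1.
Proof. by rewrite /cabs /= expr0n /= addr0 expr1n sqrtr1. Qed.

Lemma disc0 : @unit_disc R 0.
Proof. by rewrite /unit_disc /= mxE cabs0. Qed.

Lemma upper_disc (v0 L : 'rV[C]_2) :
  (forall z : 'rV[C]_1, unit_disc z -> G2 (v0 + z *m L)) ->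
  forall X : 'rV[C]_1, alpha 1%N (@G2 R) v0 (X *m L) <= cabs (X 0 0).
Proof.
case: hA => _ [hnorm hcontr] hG X.
have hol : holo_map (@unit_disc R) (@G2 R) (fun x : 'rV[C]_1 => v0 + x *m L).
  by split; [exact: hG | move=> z _; exists L; exact: affine_cderiv].
have := hcontr 0%N 1%N _ _ _ disc_domain G2_domain hol 0 L X disc0 (affine_cderiv _ _ _).
rewrite mul0mx addr0 hnorm; last exact: disc0.
have -> : (0 : 'rV[C]_1) 0 0 = 0 by rewrite mxE.
by rewrite cabs0 expr0n /= subr0 divr1.
Qed.

Definition fmap (s : C) (z : 'rV[C]_2) : 'rV[C]_1 := mk1 (z 0 0 * (1 + s * z 0 1)).
Definition fL (s : C) (z : 'rV[C]_2) : 'M[C]_(2, 1) :=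
  \matrix_(i < 2, j < 1) (if i == ord0 then 1 + s * z 0 1 else s * z 0 0).

Lemma fmap_cderiv s z : cabs s <= 1 -> cderiv (fmap s) z (fL s z).
Proof.
move=> s1 eps eps0; exists eps; split => // h hh.
have -> : fmap s (z + h) - fmap s z - h *m fL s z = mk1 (s * h 0 0 * h 0 1).
  by apply: rV1_eq; rewrite !mxE /= sum2 !mxE /=; ring.
rewrite cnorm1 mk1E !cabsM.
have h0 := cabs_le_cnorm h 0; have h1 := cabs_le_cnorm h 1.
have g0 := cabs_ge0 (h 0 0); have g1 := cabs_ge0 (h 0 1); have gs := cabs_ge0 s.
have gN := cnorm_ge0 h.
have e1 : cabs (h 0 0) * cabs (h 0 1) <= cnorm h * cnorm h by apply: ler_pM.
apply: le_trans (_ : cabs (h 0 0) * cabs (h 0 1) <= _).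
  by rewrite -mulrA ler_piMl // mulr_ge0.
apply: le_trans e1 _; apply: ler_wpM2r => //; exact: ltW.
Qed.

Lemma fmap_holo s : cabs s <= 1 -> holo_map (@G2 R) (@unit_disc R) (fmap s).
Proof.
move=> s1; split; last by move=> z _; exists (fL s z); exact: (fmap_cderiv s z s1).
move=> z; rewrite /G2 /unit_disc /fmap /= mk1E cabsM => Gz.
apply: le_lt_trans Gz; apply: ler_wpM2l; first exact: cabs_ge0.
apply: le_trans (cabsD _ _) _; rewrite cabs1 lerD2l cabsM.
have := cabs_ge0 (z 0 1); nra.
Qed.

Lemma lower_G2 (s : C) (b X : 'rV[C]_2) : cabs s <= 1 -> G2 b ->
  cabs (X 0 0 * (1 + s * b 0 1) + X 0 1 * (s * b 0 0)) /
    (1 - cabs (b 0 0 * (1 + s * b 0 1)) ^+ 2) <= alpha 1%N (@G2 R) b X.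
Proof.
case: hA => _ [hnorm hcontr] s1 Gb.
have := hcontr 1%N 0%N _ _ _ G2_domain disc_domain (fmap_holo s s1) b (fL s b) X Gb
   (fmap_cderiv s b s1).
rewrite hnorm; last by case: (fmap_holo s s1) => h _; exact: h.
by rewrite mul21E !mxE /=.
Qed.

Definition e1 : 'rV[C]_2 := mk2 (Complex 1 0) (Complex 0 0).
Definition e2 : 'rV[C]_2 := mk2 (Complex 0 0) (Complex 1 0).

Lemma alpha_ge0 z X : G2 z -> 0 <= alpha 1%N (@G2 R) z X.
Proof. by case: hA => hp _ Gz; have [] := hp 1%N _ G2_domain z X Gz. Qed.

Lemma cseminorm_ge0 n (p : 'rV[C]_n -> R) X : cseminorm p -> 0 <= p X.
Proof.
case=> htri hom.
have h := htri X (- X).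
rewrite subrr -(scale0r (0 : 'rV[C]_n)) hom cabs0 mul0r in h.
rewrite -scaleN1r hom cabsN cabs1 mul1r in h.
by move: h; lra.
Qed.

Lemma A1 : alpha 1%N (@G2 R) 0 e1 <= 1.
Proof.
have E : mk1 1 *m e1 = e1.
  by apply: rV2_eq; rewrite mul12E mk1E mul1r.
have hG : forall z, unit_disc z -> @G2 R (0 + z *m e1).
  move=> z; rewrite /unit_disc /G2 /= add0r !mul12E /e1 mk2E0 mk2E1.
  have -> : Complex (0 : R) 0 = 0 by [].
  have -> : Complex (1 : R) 0 = 1 by [].
  by rewrite mulr0 mulr1 cabs0 addr0 mulr1.
by have := upper_disc 0 e1 hG (mk1 1); rewrite E mk1E cabs1.
Qed.

Lemma A2 : alpha 1%N (@G2 R) 0 e2 = 0.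
Proof.
apply/le_anti/andP; split; last exact: alpha_ge0 G2_0.
have hr : forall r : R, 0 < r -> alpha 1%N (@G2 R) 0 e2 <= r^-1.
  move=> r r0.
  have E : mk1 (r^-1)%:C *m mk2 0 r%:C = e2.
    apply: rV2_eq; rewrite mul12E mk1E /e2 ?mk2E0 ?mk2E1 ?mulr0 //.
    by rewrite -rmorphM mulVf ?gt_eqF.
  have hG : forall z, unit_disc z -> @G2 R (0 + z *m mk2 0 r%:C).
    by move=> z _; rewrite /G2 /= add0r !mul12E mk2E0 mulr0 cabs0 mul0r.
  have := upper_disc 0 (mk2 0 r%:C) hG (mk1 (r^-1)%:C).
  by rewrite E mk1E cabsR ger0_norm // invr_ge0 ltW.
set x := alpha _ _ _ _ in hr *.
have x0 : 0 <= x by exact: alpha_ge0 G2_0.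
rewrite leNgt; apply/negP => xpos.
have := hr (2 / x) (divr_gt0 (ltr0Sn _ 1) xpos).
rewrite invf_div; lra.
Qed.


Lemma A3 : eta_hat (alpha 1%N (@G2 R)) 0 e2 = 0.
Proof.
rewrite /eta_hat.
set P := [set p | cseminorm p /\ _].
have -> : [set p e2 | p in P] = [set 0].
  apply/seteqP; split => y /=.
    case=> p [sp hp] <-; apply/le_anti/andP; split; last exact: cseminorm_ge0.
    by rewrite -A2; exact: hp.
  move=> ->; exists (fun _ => 0) => //; split.
    by split => [X Y|l X]; rewrite ?addr0 ?mulr0.
  by move=> Y; exact: alpha_ge0 G2_0.
exact: sup1.
Qed.

Lemma hdot_e2 (Y : 'rV[C]_2) : hdot e2 Y = cconj (Y 0 1).
Proof.
rewrite /hdot sum2 /e2 mk2E0 mk2E1.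
have -> : Complex (0 : R) 0 = 0 by [].
have -> : Complex (1 : R) 0 = 1 by [].
by rewrite mul0r add0r mul1r.
Qed.

Lemma A4 : (m_eta (alpha 1%N (@G2 R)) 0 <= 1)%N.
Proof.
rewrite /m_eta.
set P := [set k | _].
have [[k Pk]|nP] := pselect (exists k, P k); last by rewrite xgetPN //; move=> k Pk; apply: nP; exists k.
have := xgetPex 0%N (ex_intro _ k Pk).
set m := xget _ _; case=> E [rf hb].
have rk : \rank E = m by apply/eqP.
have V2 : V_eta (alpha 1%N (@G2 R)) 0 e2 by rewrite /V_eta /= A3.
have sE : (E <= e1)%MS.
  apply/row_subP => i.
  have Ui : U_eta (alpha 1%N (@G2 R)) 0 (row i E) by apply/hb; exact: row_sub.
  have := Ui _ V2; rewrite hdot_e2 mxE cconjE => /eqP; rewrite conjc_eq0 => /eqP Ei1.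
  have -> : row i E = E i 0 *: e1.
    apply: rV2_eq; rewrite !mxE /e1 ?mk2E0 ?mk2E1 /=.
      by have -> : Complex (1 : R) 0 = 1 by []; rewrite mulr1.
    by rewrite Ei1; have -> : Complex (0 : R) 0 = 0 by []; rewrite mulr0.
  by apply: scalemx_sub; exact: submx_refl.
by rewrite -rk; apply: leq_trans (mxrankS sE) (rank_leq_row _).
Qed.

Lemma hform0 n (X Y : 'rV[C]_n) : hform 0 X Y = 0.
Proof. by rewrite /hform mulmx0 mul0mx mxE. Qed.

Lemma A5 : Wu (alpha 1%N (@G2 R)) 0 e1 <= 1.
Proof.
rewrite /Wu.
have m1 : Num.sqrt (m_eta (alpha 1%N (@G2 R)) 0)%:R <= 1 :> R.
  have hm : (m_eta (alpha 1%N (@G2 R)) 0)%:R <= 1 :> R by rewrite lern1; exact: A4.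
  by apply: le_trans (ler_wsqrtr hm) _; rewrite sqrtr1.
have W1 : Wtilde (alpha 1%N (@G2 R)) 0 e1 <= 1.
  rewrite /Wtilde /s_eta; set P := [set S | _].
  have [[S PS]|nP] := pselect (exists S, P S); last first.
    rewrite xgetPN; last by move=> S PS; apply: nP; exists S.
    by rewrite hform0 /= sqrtr0.
  have [[_ hF] _] := xgetPex 0 (ex_intro _ S PS).
  have [_ h] := hF e1; apply: le_trans h A1.
have W0 : 0 <= Wtilde (alpha 1%N (@G2 R)) 0 e1 by exact: sqrtr_ge0.
have s0 : 0 <= Num.sqrt (m_eta (alpha 1%N (@G2 R)) 0)%:R :> R by exact: sqrtr_ge0.
by have := ler_pM s0 W0 m1 W1; rewrite mulr1.
Qed.


Definition bpt (eps : R) : 'rV[C]_2 := mk2 eps%:C 0.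

Lemma B1 eps : 0 < eps < 1 -> @G2 R (bpt eps).
Proof.
case/andP=> e0 e1'; rewrite /G2 /bpt /= mk2E0 mk2E1 cabsR cabs0 addr0 mulr1.
by rewrite ger0_norm // ltW.
Qed.

Lemma B2 (eps : R) (s : C) (X : 'rV[C]_2) : 0 < eps < 1 -> cabs s <= 1 ->
  cabs (X 0 0 + X 0 1 * (s * eps%:C)) <= alpha 1%N (@G2 R) (bpt eps) X.
Proof.
move=> he s1; have := lower_G2 s (bpt eps) X s1 (B1 eps he).
rewrite /bpt mk2E0 mk2E1 mulr0 addr0 !mulr1 cabsR ger0_norm; last by case/andP: he => ? ?; exact: ltW.
move=> h; apply: le_trans h; case/andP: he => e0 e1'.
have d0 : 0 < 1 - eps ^+ 2 by nra.
rewrite ler_pdivlMr //; have := cabs_ge0 (X 0 0 + X 0 1 * (s * eps%:C)); nra.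
Qed.

Lemma cabs_eq0 (z : C) : cabs z = 0 -> z = 0.
Proof. by move=> h; apply/normr0_eq0; rewrite -cabsC h. Qed.

Lemma B3 (eps : R) (X : 'rV[C]_2) : 0 < eps < 1 -> eta_hat (alpha 1%N (@G2 R)) (bpt eps) X = 0 -> X = 0.
Proof.
move=> he h0.
have key : forall s : C, cabs s <= 1 -> X 0 0 + X 0 1 * (s * eps%:C) = 0.
  move=> s s1; apply: cabs_eq0; apply/le_anti/andP; split; last exact: cabs_ge0.
  rewrite -h0 /eta_hat.
  pose p := fun Y : 'rV[C]_2 => cabs (Y 0 0 + Y 0 1 * (s * eps%:C)).
  apply: ub_le_sup.
    exists (alpha 1%N (@G2 R) (bpt eps) X) => y [q [_ hq] <-]; exact: hq.
  exists p => //; split; last by move=> Y; exact: B2.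
  split.
    move=> Y Z; rewrite /p !mxE.
    have -> : Y 0 0 + Z 0 0 + (Y 0 1 + Z 0 1) * (s * eps%:C) =
      (Y 0 0 + Y 0 1 * (s * eps%:C)) + (Z 0 0 + Z 0 1 * (s * eps%:C)) by ring.
    exact: cabsD.
  move=> l Y; rewrite /p !mxE -cabsM; congr cabs; ring.
have h1 : X 0 0 + X 0 1 * (1 * eps%:C) = 0 by apply: key; rewrite cabs1.
have hm1 : X 0 0 + X 0 1 * (-1 * eps%:C) = 0 by apply: key; rewrite cabsN cabs1.
have e2' : X 0 1 * (2 * eps%:C) = 0.
  have -> : X 0 1 * (2 * eps%:C) = (X 0 0 + X 0 1 * (1 * eps%:C)) - (X 0 0 + X 0 1 * (-1 * eps%:C)) by ring.
  by rewrite h1 hm1 subrr.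
have x1 : X 0 1 = 0.
  move/eqP: e2'; rewrite mulf_eq0 => /orP[/eqP //|].
  rewrite mulf_eq0 pnatr_eq0 /= fmorph_eq0; case/andP: he => e0 _.
  by rewrite gt_eqF.
have x0 : X 0 0 = 0 by move: h1; rewrite x1 mul0r addr0.
by apply: rV2_eq; rewrite ?x0 ?x1 mxE.
Qed.


Lemma B4 (eps : R) : 0 < eps < 1 -> forall Y, U_eta (alpha 1%N (@G2 R)) (bpt eps) Y.
Proof.
move=> he Y X VX; have -> := B3 eps X he VX.
by rewrite /hdot big1 // => i _; rewrite mxE mul0r.
Qed.

Lemma B5 (eps : R) : 0 < eps < 1 -> m_eta (alpha 1%N (@G2 R)) (bpt eps) = 2%N.
Proof.
move=> he; rewrite /m_eta; apply: xget_unique.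
  exists (1%:M : 'M[C]_2); split; first by rewrite /row_free mxrank1.
  by move=> X; split => _; [exact: submx1 | exact: B4].
move=> k [E [rf hb]].
have rk : \rank E = k by apply/eqP.
have sE : (1%:M <= E)%MS.
  by apply/row_subP => i; apply/hb; exact: B4.
have := mxrankS sE; rewrite mxrank1 rk => h1.
have := rank_leq_col E; rewrite rk => h2.
by apply/eqP; rewrite eqn_leq h1 h2.
Qed.

Lemma B7 (eps : R) : 0 < eps < 1 -> alpha 1%N (@G2 R) (bpt eps) e2 <= eps / (1 - eps).
Proof.
case/andP=> e0 e1'.
set r := (1 - eps) / eps.
have r0 : 0 < r by rewrite /r divr_gt0 // subr_gt0.
have E : mk1 (r^-1)%:C *m mk2 0 r%:C = e2.
  apply: rV2_eq; rewrite mul12E mk1E /e2 ?mk2E0 ?mk2E1 ?mulr0 //.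
  by rewrite -rmorphM mulVf ?gt_eqF.
have hG : forall z, unit_disc z -> @G2 R (bpt eps + z *m mk2 0 r%:C).
  move=> z; rewrite /unit_disc /G2 /= ![(_ + _ : 'rV[C]_2) 0 _]mxE !mul12E /bpt !mk2E0 !mk2E1.
  rewrite mulr0 addr0 add0r cabsM (cabsR eps) (cabsR r) (ger0_norm (ltW e0)) (ger0_norm (ltW r0)) => hz.
  have hz0 := cabs_ge0 (z 0 0).
  have : eps * (1 + r) = 1 by rewrite /r mulrDr mulr1 mulrCA mulfV ?gt_eqF // mulr1 addrC subrK.
  nra.
have := upper_disc (bpt eps) (mk2 0 r%:C) hG (mk1 (r^-1)%:C).
by rewrite E mk1E cabsR ger0_norm ?invr_ge0 ?(ltW r0) // /r invf_div.
Qed.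


Lemma cabs_sq_lin (z w : C) (c : R) : cabs (z + w * c%:C) ^+ 2 =
  (complex.Re z + complex.Re w * c) ^+ 2 + (complex.Im z + complex.Im w * c) ^+ 2.
Proof.
rewrite /cabs sqr_sqrtr ?addr_ge0 ?sqr_ge0 //.
case: z => x0 y0; case: w => x1 y1 /=.
congr (_ ^+ 2 + _ ^+ 2); ring.
Qed.

Lemma B6 (eps : R) : 0 < eps < 1 ->
  exists v0 : R, (1 - eps) ^+ 2 <= v0 /\
    Wu (alpha 1%N (@G2 R)) (bpt eps) e1 = Num.sqrt (2 * v0).
Proof.
move=> he; have [ep0 ep1] := andP he.
set eta := alpha 1%N (@G2 R); set b := bpt eps.
have e0 : forall X, 0 <= eta b X by move=> X; exact: alpha_ge0 (B1 eps he).
have [S PS] := exists_max e0 (B4 eps he).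
have hx := @xgetPex _ 0 [set S | F_eta eta b S /\ forall T, F_eta eta b T -> prec_eta eta b T S] (ex_intro _ S PS).
have [Fs ms] : F_eta eta b (s_eta eta b) /\ forall T, F_eta eta b T -> prec_eta eta b T (s_eta eta b) by exact: hx.
set s := s_eta eta b in Fs ms.
case: (Fs) => hs _.
have sv := herm_hm hs.
set v := pv s in sv.
have Fv : forall X, 0 <= qf v X /\ qf v X <= eta b X ^+ 2.
  by apply/F_hm => //; rewrite -sv.
pose tv : 'rV[R]_4 := \row_i (if i == 0 then 1 else if i == 1 then eps ^+ 2 else 0).
have FT : F_eta eta b (hm tv).
  apply/F_hm => // X.
  have -> : qf tv X = (complex.Re (X 0 0) ^+ 2 + complex.Im (X 0 0) ^+ 2) +
      eps ^+ 2 * (complex.Re (X 0 1) ^+ 2 + complex.Im (X 0 1) ^+ 2).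
    by rewrite /qf !mxE /=; ring.
  have c1 : cabs (1 : C) <= 1 by rewrite cabs1.
  have cm1 : cabs (-1 : C) <= 1 by rewrite cabsN cabs1.
  have hp : cabs (X 0 0 + X 0 1 * eps%:C) <= eta b X.
    by have := B2 eps 1 X he c1; rewrite mul1r.
  have hm : cabs (X 0 0 + X 0 1 * (- eps)%:C) <= eta b X.
    by have := B2 eps (-1) X he cm1; rewrite mulN1r rmorphN.
  have sp := cabs_sq_lin (X 0 0) (X 0 1) eps.
  have sm := cabs_sq_lin (X 0 0) (X 0 1) (- eps).
  have gp := cabs_ge0 (X 0 0 + X 0 1 * eps%:C).
  have gm := cabs_ge0 (X 0 0 + X 0 1 * (- eps)%:C).
  have pp := ler_pM gp gp hp hp.
  have mm := ler_pM gm gm hm hm.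
  rewrite -expr2 in pp mm.
  move: sp sm pp mm.
  set A := cabs _; set B := cabs _; set E := eta b X.
  move: (complex.Re (X 0 0)) (complex.Im (X 0 0)) (complex.Re (X 0 1)) (complex.Im (X 0 1)) => x0 y0 x1 y1.
  move=> sp sm pp mm; split; first by nra.
  nra.
have basis1 : is_basis_U eta b (1%:M : 'M[C]_2).
  split; first by rewrite /row_free mxrank1.
  by move=> X; split => _; [exact: submx1 | exact: B4].
have hpr := ms (hm tv) FT 2 1%:M basis1.
have tv0 : tv 0 0 = 1 by rewrite mxE.
have tv1 : tv 0 1 = eps ^+ 2 by rewrite mxE.
have tv2 : tv 0 2 = 0 by rewrite mxE.
have tv3 : tv 0 3 = 0 by rewrite mxE.
move: hpr; rewrite !det_gram det1 cabs1 expr1n rmorph1 !mulr1 sv !det_hm lecR tv0 tv1 tv2 tv3 => hdet.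
have e2b := (Fv e2).2; rewrite /e2 qf_mk2 in e2b.
have e1b := (Fv e1).1; rewrite /e1 qf_mk2 in e1b.
have b7 := B7 eps he; have t0 := e0 e2.
exists (v 0 0); split.
  rewrite -/eta -/b in b7.
  move: hdet e2b e1b b7 t0.
  set t := eta b e2.
  move: (v 0 0) (v 0 1) (v 0 2) (v 0 3) => a d x y hdet e2b e1b b7 t0.
  have d0 : 0 < 1 - eps by rewrite subr_gt0.
  rewrite ler_pdivlMr // in b7.
  have h1 : d <= t ^+ 2 by nra.
  have h2 : (t * (1 - eps)) ^+ 2 <= eps ^+ 2.
    by rewrite !expr2; apply: ler_pM => //; apply: mulr_ge0 => //; exact: ltW.
  have ha : 0 <= a by move: e1b; rewrite !expr1n !expr0n /=; lra.
  have h3' : a * d <= a * t ^+ 2 by apply: ler_wpM2l.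
  have hxx := sqr_ge0 x; have hyy := sqr_ge0 y.
  have h3 : eps ^+ 2 <= a * t ^+ 2.
    move: hdet; rewrite !expr0n /= mul1r; lra.
  have h4 : eps ^+ 2 * (1 - eps) ^+ 2 <= a * eps ^+ 2.
    apply: le_trans (_ : a * t ^+ 2 * (1 - eps) ^+ 2 <= _).
      by apply: ler_wpM2r => //; exact: sqr_ge0.
    by rewrite -mulrA -exprMn; apply: ler_wpM2l.
  have ep2 : 0 < eps ^+ 2 by rewrite exprn_gt0.
  by rewrite -(ler_pM2r ep2) mulrC.
rewrite /Wu B5 // /Wtilde -/s sv hform_hm /= /e1 qf_mk2 -sqrtrM //.
congr Num.sqrt; rewrite !expr1n !expr0n /=; ring.
Qed.


Lemma main_result : ~ usc_on (@G2 R) (Wu (alpha 1%N (@G2 R))).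
Proof.
move=> husc.
have q0 : (0 : R) < 1 / 4 by rewrite divr_gt0.
have [delta [d0 hd]] := husc 0 e1 G2_0 (1 / 4) q0.
set eps : R := Num.min (delta / 2) (1 / 20).
have ep0 : 0 < eps by rewrite lt_min !divr_gt0.
have ep1 : eps <= 1 / 20 by rewrite ge_min lexx orbT.
have ep2 : eps <= delta / 2 by rewrite ge_min lexx.
have he : 0 < eps < 1 by rewrite ep0 /=; lra.
have hb : cnorm (bpt eps - 0) < delta.
  rewrite subr0 cnorm2 /bpt mk2E0 mk2E1 cabsR cabs0 expr0n /= addr0 sqrtr_sqr.
  rewrite !ger0_norm ?ltW //; lra.
have hX : cnorm (e1 - e1) < delta by rewrite subrr cnorm0.
have := hd (bpt eps) e1 (B1 eps he) hb hX.
have [v0 [hv ->]] := B6 eps he.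
have hA5 := A5.
have key : 5 / 4 <= Num.sqrt (2 * v0).
  have -> : (5 / 4 : R) = Num.sqrt ((5 / 4) ^+ 2) by rewrite sqrtr_sqr ger0_norm // divr_ge0.
  rewrite ler_sqrt; last by nra.
  nra.
lra.
Qed.

End P6.
End Main.

Unset Implicit Arguments.
Local Open Scope ring_scope.

Theorem proposition3p3 (R : realType)
  (alpha : forall n : nat, set 'rV[R[i]]_n.+1 -> 'rV[R[i]]_n.+1 -> 'rV[R[i]]_n.+1 -> R) :
  holo_contractible_family alpha ->
  ~ usc_on (@G2 R) (Wu (alpha 1%N (@G2 R))).
Proof.
move=> hA; exact: (main_result R alpha hA).
Qed.
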